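(* Let $a,\epsilon,\kappa\in\mathbb{R}$ and let $p:\mathbb{R}\to\mathbb{R}$ be a $2\pi$-periodic function with zero mean. Consider the damped Hill equation $$\ddot{\theta} + 2\kappa\dot{\theta} + \big(a+\epsilon p(t)\big)\theta = 0,$$ and let $\Theta(t,0)$ denote its $2\times 2$ state transition matrix in the state $(\theta,\dot\theta)^{\mathrm T}$. Define the related undamped Hill equation $$\ddot{z} + \big(a-\kappa^2+\epsilon p(t)\big) z = 0,$$ with $2\times 2$ state transition matrix $\Phi(t,0;a,\epsilon)$ in the state $(z,\dot z)^{\mathrm T}$. If $$\big|\operatorname{tr}\,\Phi(2\pi,0;a,\epsilon)\big| > 2\cosh(2\pi\kappa),$$ then the damped Hill equation is unstable, i.e. its monodromy matrix $\Theta(2\pi,0)$ has an eigenvalue of modulus strictly greater than $1$.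
   Context: For a linear system $\dot x = A(t)x$ with $2\pi$-periodic $A$, the state transition matrix $\Theta(t,0)$ is the matrix solution of $\dot\Theta = A(t)\Theta$, $\Theta(0,0)=I$, so that $x(t)=\Theta(t,0)x(0)$; the monodromy matrix is $\Theta(2\pi,0)$. The system is called unstable when the monodromy matrix has an eigenvalue outside the closed unit disk. Here $\kappa$ is the viscous damping coefficient, $a$ the mean spring constant, and $\epsilon$ the parametric forcing amplitude. *)

(* Defs.v *)
From HB Require Import structures.
From mathcomp Require Import all_boot all_order all_algebra.
From mathcomp Require Import all_classical all_reals all_analysis.
From mathcomp Require Import complex.
Set Implicit Arguments. Unset Strict Implicit. Unset Printing Implicit Defensive.
Import Order.TTheory GRing.Theory Num.Theory.
Import numFieldNormedType.Exports.
Local Open Scope ring_scope.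

Definition coshR {R : realType} (x : R) : R := (expR x + expR (- x)) / 2.

(* Companion matrix of  x'' + c x' + q(t) x = 0  in the state (x, x')^T:
   A(t) = [[0, 1], [-q(t), -c]] *)
Definition companion {R : realType} (c : R) (q : R -> R) (t : R) : 'M[R]_2 :=
  \matrix_(i < 2, j < 2)
    (if i == 0 :> nat then (if j == 0 :> nat then 0 else 1)
     else (if j == 0 :> nat then - q t else - c)).

Definition is_state_transition {R : realType} (A : R -> 'M[R]_2)
    (Theta : R -> 'M[R]_2) : Prop :=
  Theta 0 = 1%:M /\
  forall (t : R) (i j : 'I_2),
    is_derive t 1 (fun s => Theta s i j) ((A t *m Theta t) i j).

Definition has_eigenvalue_outside_unit_disk {R : realType} (M : 'M[R]_2) : Prop :=
  exists lambda : R[i],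
    eigenvalue (map_mx (fun x : R => (x%:C)%C) M) lambda /\ 1 < `|lambda|.

(* Main.v *)
Require Import Defs.
Set Warnings "-all".
From HB Require Import structures.
From mathcomp Require Import all_boot all_order all_algebra.
From mathcomp Require Import all_classical all_reals all_analysis.
From mathcomp Require Import complex.
From mathcomp Require Import ring lra.
Import Order.TTheory GRing.Theory Num.Theory.
Import numFieldNormedType.Exports.
Local Open Scope ring_scope.

Set Implicit Arguments.
Section H.
Variable R : realType.

Lemma dmul (f g : R -> R) (t df dg : R) : is_derive t (1:R) f df -> is_derive t (1:R) g dg ->
  is_derive t (1:R) (fun s => f s * g s) (f t * dg + g t * df).
Proof. move=> hf hg; have := is_deriveM hf hg; by []. Qed.

Lemma dadd (f g : R -> R) (t df dg : R) : is_derive t (1:R) f df -> is_derive t (1:R) g dg ->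
  is_derive t (1:R) (fun s => f s + g s) (df + dg).
Proof. move=> hf hg; have := is_deriveD hf hg; by []. Qed.

Lemma dsub (f g : R -> R) (t df dg : R) : is_derive t (1:R) f df -> is_derive t (1:R) g dg ->
  is_derive t (1:R) (fun s => f s - g s) (df - dg).
Proof. move=> hf hg; have := is_deriveB hf hg; by []. Qed.

Lemma dscal (f : R -> R) (c t df : R) : is_derive t (1:R) f df ->
  is_derive t (1:R) (fun s => c * f s) (c * df).
Proof. move=> hf; have := is_deriveZ c hf; by []. Qed.

Lemma dexp (k t : R) : is_derive t (1:R) (fun s => expR (k * s)) (k * expR (k * t)).
Proof.
have h1 : is_derive t (1:R) (fun s : R => k * s) (k * 1).
  by apply: dscal; exact: is_derive_id.
have := is_derive1_comp (f := expR) (is_derive_expR (k * t)) h1.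
by rewrite mulr1 mulrC.
Qed.

Lemma cst0 (f : R -> R) (x : R) : (forall t, is_derive t (1:R) f 0) -> f x = f 0.
Proof. by move=> h; apply: is_derive_0_is_cst. Qed.

Lemma dext (f : R -> R) (t df df' : R) : is_derive t (1:R) f df -> df = df' -> is_derive t (1:R) f df'.
Proof. by move=> h <-. Qed.

Definition sol (Q : R -> R) (u v : R -> R) :=
  forall t, is_derive t (1:R) u (v t) /\ is_derive t (1:R) v (- Q t * u t).

Lemma wron Q u v z w : sol Q u v -> sol Q z w -> forall t,
  u t * w t - v t * z t = u 0 * w 0 - v 0 * z 0.
Proof.
move=> hu hz t.
apply: (@cst0 (fun s => u s * w s - v s * z s)) => s.
have [hu1 hu2] := hu s; have [hz1 hz2] := hz s.
have H := dsub (dmul hu1 hz2) (dmul hu2 hz1). apply: (dext H).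
ring.
Qed.

Lemma compE c q t (M : 'M[R]_2) (j : 'I_2) :
  (companion c q t *m M) 0 j = M 1 j /\
  (companion c q t *m M) 1 j = - q t * M 0 j - c * M 1 j.
Proof.
have e1 : (ord_max : 'I_2) = 1 by apply/val_inj.
have e0 : widen_ord (m:=2) (leqnSn 1) ord_max = 0 by apply/val_inj.
rewrite !mxE !big_ord_recr !big_ord0 /= !mxE /= e1 e0; split; ring.
Qed.
End H.
Arguments sol {R}.
Arguments compE {R}.
Arguments dexp {R}.
Arguments wron {R Q u v z w}.
Lemma det2 (R : comNzRingType) (M : 'M[R]_2) : \det M = M 0 0 * M 1 1 - M 0 1 * M 1 0.
Proof.
rewrite (expand_det_row M 0) !big_ord_recl big_ord0 /cofactor !det_mx11 !mxE /=.
have e1 : lift ord0 ord0 = 1 :> 'I_2 by apply/val_inj.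
have e2 : lift 1 0 = 0 :> 'I_2 by apply/val_inj.
rewrite e1 /= expr0 expr1 e2; ring.
Qed.
Lemma tr2 (R : comNzRingType) (M : 'M[R]_2) : \tr M = M 0 0 + M 1 1.
Proof.
have e1 : lift ord0 ord0 = 1 :> 'I_2 by apply/val_inj.
by rewrite /mxtrace !big_ord_recl big_ord0 /= e1 addr0.
Qed.
Lemma alg (R : realType) (u0 v0 u1 v1 x0 y0 x1 y1 E k : R) :
  u0*v1 - v0*u1 = 1 ->
  u0*(E*(y0+k*x0)) - v0*(E*x0) = k ->
  u1*(E*(y0+k*x0)) - v1*(E*x0) = -1 ->
  u0*(E*(y1+k*x1)) - v0*(E*x1) = 1 ->
  u1*(E*(y1+k*x1)) - v1*(E*x1) = 0 ->
  E*(x0+y1) = u0+v1 /\ E^+2*(x0*y1 - x1*y0) = 1.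
Proof.
move=> hd hA hB hC hD.
have e1 : E*x0 = u0 + k*u1.
  transitivity ((E*x0)*(u0*v1 - v0*u1)); first by rewrite hd mulr1.
  transitivity (u1*(u0*(E*(y0+k*x0)) - v0*(E*x0)) - u0*(u1*(E*(y0+k*x0)) - v1*(E*x0))); first ring.
  rewrite hA hB; ring.
have e2 : E*(y0+k*x0) = v0 + k*v1.
  transitivity ((E*(y0+k*x0))*(u0*v1 - v0*u1)); first by rewrite hd mulr1.
  transitivity (v1*(u0*(E*(y0+k*x0)) - v0*(E*x0)) - v0*(u1*(E*(y0+k*x0)) - v1*(E*x0))); first ring.
  rewrite hA hB; ring.
have e3 : E*x1 = u1.
  transitivity ((E*x1)*(u0*v1 - v0*u1)); first by rewrite hd mulr1.
  transitivity (u1*(u0*(E*(y1+k*x1)) - v0*(E*x1)) - u0*(u1*(E*(y1+k*x1)) - v1*(E*x1))); first ring.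
  rewrite hC hD; ring.
have e4 : E*(y1+k*x1) = v1.
  transitivity ((E*(y1+k*x1))*(u0*v1 - v0*u1)); first by rewrite hd mulr1.
  transitivity (v1*(u0*(E*(y1+k*x1)) - v0*(E*x1)) - v0*(u1*(E*(y1+k*x1)) - v1*(E*x1))); first ring.
  rewrite hC hD; ring.
split.
  transitivity (E*x0 + E*(y1+k*x1) - k*(E*x1)); first ring.
  rewrite e1 e3 e4; ring.
transitivity ((E*x0)*(E*(y1+k*x1)) - (E*x1)*(E*(y0+k*x0))); first ring.
rewrite e1 e2 e3 e4 -hd; ring.
Qed.

Lemma quad (R : realType) (T D : R) : 0 < D -> 1 + D < `|T| ->
  exists l : R, l^+2 - T * l + D = 0 /\ 1 < `|l|.
Proof.
move=> hD hT.
have hdisc : 0 <= T^+2 - 4*D.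
  have h1 : (1 + D)^+2 < `|T|^+2.
    have hn := normr_ge0 T; rewrite !expr2; nra.
  move: h1; rewrite real_normK ?num_real // !expr2 => h1. have := sqr_ge0 (1 - D); rewrite expr2; nra.
set s := Num.sqrt (T^+2 - 4*D).
have s0 : 0 <= s by apply: sqrtr_ge0.
have s2 : s * s = T * T - 4 * D by rewrite -!expr2 sqr_sqrtr // expr2.
have [T0|T0] := leP 0 T.
  rewrite ger0_norm // in hT.
  exists ((T + s)/2); split.
    transitivity ((s * s - (T * T - 4 * D))/4); first by rewrite expr2; field.
    by rewrite s2 subrr mul0r.
  rewrite ger0_norm; last lra.
  have : 2 - T < s by nra.
  lra.
rewrite ltr0_norm // in hT.
exists ((T - s)/2); split.
  transitivity ((s * s - (T * T - 4 * D))/4); first by rewrite expr2; field.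
  by rewrite s2 subrr mul0r.
rewrite ltr0_norm; last lra.
have : 2 + T < s by nra.
lra.
Qed.
Lemma eig_real_root (R : realType) (M : 'M[R]_2) (l : R) :
  l ^+ 2 - \tr M * l + \det M = 0 -> 1 < `|l| ->
  has_eigenvalue_outside_unit_disk M.
Proof.
move=> hl hgt.
have rootM : root (char_poly M) l.
  apply/rootP; rewrite horner_coef size_char_poly !big_ord_recr big_ord0 /= add0r.
  have h0 := char_poly_det M; have h1 := char_poly_trace M (isT : (0 < 2)%N).
  have h2 : (char_poly M)`_2 = 1.
    by have := monicP (char_poly_monic M); rewrite lead_coefE size_char_poly.
  rewrite h0 h1 h2 /= expr0 expr1 mulr1 mul1r; rewrite -hl. 
  rewrite expr2 mulN1r opprK mul1r; ring.
exists (l%:C)%C; split.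
  rewrite eigenvalue_root_char.
  have := rmorph_root (real_complex R) rootM.
  by rewrite map_char_poly.
rewrite normc_def /= expr0n /= addr0 sqrtr_sqr ltcR //.
Qed.

Theorem theorem3p1 (R : realType) (a epsilon kappa : R) (p : R -> R)
  (Theta Phi : R -> 'M[R]_2) :
  continuous p ->
  (forall t : R, p (t + 2 * pi) = p t) ->
  (\int[@lebesgue_measure R]_(t in `[0%R, (2 * pi)%R]) (p t)%:E = 0)%E ->
  is_state_transition (companion (2 * kappa) (fun t => a + epsilon * p t)) Theta ->
  is_state_transition (companion 0 (fun t => a - kappa ^+ 2 + epsilon * p t)) Phi ->
  2 * coshR (2 * pi * kappa) < `|\tr (Phi (2 * pi))| ->
  has_eigenvalue_outside_unit_disk (Theta (2 * pi)).
Proof.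
move=> _ _ _ [hT0 hTd] [hP0 hPd] htr.
pose Q := fun t => a - kappa ^+ 2 + epsilon * p t.
have solP : forall j : 'I_2, sol Q (fun s => Phi s 0 j) (fun s => Phi s 1 j).
  move=> j t; have [c0 c1] := compE 0 (fun t => a - kappa ^+ 2 + epsilon * p t) t (Phi t) j; split.
  - by have := hPd t 0 j; rewrite c0.
  - have H := hPd t 1 j; apply: (dext H).
    by rewrite c1 /Q; ring.
have solT : forall j : 'I_2, sol Q (fun s => expR (kappa * s) * Theta s 0 j)
   (fun s => expR (kappa * s) * (Theta s 1 j + kappa * Theta s 0 j)).
  move=> j t; have [c0 c1] := compE (2 * kappa) (fun t => a + epsilon * p t) t (Theta t) j.
  have hx := hTd t 0 j; rewrite c0 in hx.
  have hy := hTd t 1 j; rewrite c1 in hy.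
  split.
  - have H := dmul (dexp kappa t) hx; apply: (dext H).
    ring.
  - have H := dmul (dexp kappa t) (dadd hy (dscal kappa hx)); apply: (dext H).
    rewrite /Q; ring.
have iP : forall i j, Phi 0 i j = (i == j)%:R by move=> i j; rewrite hP0 mxE.
have iT : forall i j, Theta 0 i j = (i == j)%:R by move=> i j; rewrite hT0 mxE.
have hd := wron (solP 0) (solP 1) (2 * pi).
have hA := wron (solP 0) (solT 0) (2 * pi).
have hB := wron (solP 1) (solT 0) (2 * pi).
have hC := wron (solP 0) (solT 1) (2 * pi).
have hD := wron (solP 1) (solT 1) (2 * pi).
rewrite /= !iP in hd hA hB hC hD.
rewrite /= !mulr0 expR0 !iT /= in hA hB hC hD.
have e10 : ((1 : 'I_2) == 0) = false by [].
have e01 : ((0 : 'I_2) == 1) = false by [].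
rewrite !eqxx e10 e01 /= in hd.
rewrite ?(mul1r, mul0r, mulr0, mulr1, add0r, addr0, subr0, sub0r, subrr, oppr0) in hd hA hB hC hD.
have [htrE hdetE] := @alg R _ _ _ _ _ _ _ _ _ _ hd hA hB hC hD.
set E := expR (kappa * (2 * pi)) in htrE hdetE.
have E0 : 0 < E by apply: expR_gt0.
set T := Theta (2 * pi) 0 0 + Theta (2 * pi) 1 1 in htrE.
set D := Theta (2 * pi) 0 0 * Theta (2 * pi) 1 1 -
     Theta (2 * pi) 0 1 * Theta (2 * pi) 1 0 in hdetE.
have E2 : E ^+ 2 != 0 by rewrite expf_neq0 // gt_eqF.
have hDE : D = (E ^+ 2)^-1 by apply: (mulfI E2); rewrite hdetE mulfV.
have hD0 : 0 < D by rewrite hDE invr_gt0 exprn_gt0.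
have hkey : 1 + D < `|T|.
  rewrite -(ltr_pM2l E0).
  have -> : E * `|T| = `|\tr (Phi (2 * pi))| by rewrite tr2 -htrE normrM (gtr0_norm E0).
  suff -> : E * (1 + D) = 2 * coshR (2 * pi * kappa) by [].
  rewrite /coshR hDE /E expRN (mulrC kappa (2 * pi)).
  by field; rewrite gt_eqF // expR_gt0.
have [l [hl1 hl2]] := @quad R T D hD0 hkey.
apply: (@eig_real_root R _ l _ hl2).
by rewrite tr2 det2.
Qed.
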